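(* Let $F$ be a diagonal free self-map of $\mathbb{T}^n$. Let $z\in\mathbb{R}^n$ and $r\in\mathbb{R}_{\ge0}$. If the Hilbert ball $B_H(z,r)$ is contained in $\mathcal{S}(F)$, then $r\le\mathbf{b}(F(z)-z)$.
   Context: $\mathbb{T}=\mathbb{R}\cup\{-\infty\}$, ordered entrywise on $\mathbb{T}^n$. A self-map $F$ of $\mathbb{T}^n$ is order-preserving if $x\le y\Rightarrow F(x)\le F(y)$, and additively homogeneous if $F(\lambda+x)=\lambda+F(x)$ for all $\lambda\in\mathbb{T}$, $x\in\mathbb{T}^n$. An order-preserving, additively homogeneous self-map $F$ of $\mathbb{T}^n$ is diagonal free if for every $i\in\{1,\dots,n\}$ and all $x,y\in\mathbb{R}^n$ with $x_j=y_j$ for all $j\ne i$, one has $F_i(x)=F_i(y)$. For a vector $x$, $\mathbf{t}(x)=\max_i x_i$, $\mathbf{b}(x)=\min_i x_i$; $\|x\|_H=\mathbf{t}(x)-\mathbf{b}(x)$ on $\mathbb{R}^n$, and $B_H(z,r)=\{x\in\mathbb{R}^n: \|x-z\|_H\le r\}$. $\mathcal{S}(F)=\{x\in\mathbb{T}^n: x\le F(x)\}$. *)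

(* Defs.v *)
(* The tropical semifield T = R ∪ {-oo} is modelled as
   [option R] with [None] standing for -oo, over an arbitrary real field R
   (the paper's R is an instance). *)
From HB Require Import structures.
From mathcomp Require Import all_boot all_order all_algebra.
Set Implicit Arguments. Unset Strict Implicit. Unset Printing Implicit Defensive.
Import Order.TTheory GRing.Theory Num.Theory.
Local Open Scope ring_scope.

Section Trop.
Variable R : realFieldType.

Definition trop := option R.

Definition Tle (a b : trop) : Prop :=
  match a, b with
  | None, _ => True
  | Some _, None => False
  | Some a, Some b => a <= b
  end.

(* addition on T (the tropical multiplication): -oo is absorbing *)
Definition Tadd (l a : trop) : trop :=
  match l, a with
  | Some l, Some a => Some (l + a)
  | _, _ => None
  end.

Definition Tmin (a b : trop) : trop :=
  match a, b with
  | Some a, Some b => Some (Num.min a b)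
  | _, _ => None
  end.

Variable n : nat.
Definition tvec := {ffun 'I_n -> trop}.
Definition rvec := {ffun 'I_n -> R}.

Definition vle (x y : tvec) : Prop := forall i, Tle (x i) (y i).

Definition vshift (l : trop) (x : tvec) : tvec := [ffun i => Tadd l (x i)].

Definition emb (x : rvec) : tvec := [ffun i => Some (x i)].

Definition order_preserving (F : tvec -> tvec) : Prop :=
  forall x y, vle x y -> vle (F x) (F y).

Definition add_homogeneous (F : tvec -> tvec) : Prop :=
  forall (l : trop) (x : tvec), F (vshift l x) = vshift l (F x).

Definition diagonal_free (F : tvec -> tvec) : Prop :=
  [/\ order_preserving F, add_homogeneous F &
      forall (i : 'I_n) (x y : rvec),
        (forall j, j != i -> x j = y j) -> F (emb x) i = F (emb y) i].

Definition superfix (F : tvec -> tvec) (x : tvec) : Prop := vle x (F x).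

(* t(x) = max_i x_i and b(x) = min_i x_i for real vectors (n >= 1;
   an arbitrary value 0 is returned when n = 0) *)
Definition rtop (x : rvec) : R :=
  match [pick i : 'I_n] with
  | Some i0 => \big[Num.max/x i0]_(i < n) x i
  | None => 0
  end.
Definition rbot (x : rvec) : R :=
  match [pick i : 'I_n] with
  | Some i0 => \big[Num.min/x i0]_(i < n) x i
  | None => 0
  end.

Definition tbot (x : tvec) : trop :=
  match [pick i : 'I_n] with
  | Some i0 => \big[Tmin/x i0]_(i < n) x i
  | None => Some 0
  end.

Definition hnorm (x : rvec) : R := rtop x - rbot x.
Definition hball (z : rvec) (r : R) (x : rvec) : Prop :=
  hnorm [ffun i => x i - z i] <= r.

Definition tsub_real (y : tvec) (z : rvec) : tvec := [ffun i => Tadd (Some (- z i)) (y i)].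

End Trop.

(* Main.v *)
Require Import Defs.
From HB Require Import structures.
From mathcomp Require Import all_boot all_order all_algebra.
Import Order.TTheory GRing.Theory Num.Theory.
Local Open Scope ring_scope.

Theorem mainTheorem5 (R : realFieldType) (n : nat) (Hn : (0 < n)%N)
    (F : tvec R n -> tvec R n) (HF : diagonal_free F)
    (z : rvec R n) (r : R) (Hr : 0 <= r)
    (Hball : forall x : rvec R n, hball z r x -> superfix F (emb x)) :
  Tle (Some r) (tbot (tsub_real (F (emb z)) z)).
Proof.
case: HF => _ _ Hdiag.
have key : forall i, Tle (Some r) (tsub_real (F (emb z)) z i).
  move=> i.
  pose x : rvec R n := [ffun j => if j == i then z j + r else z j].
  have hx : hball z r x.
    rewrite /hball /hnorm /rtop /rbot.
    case: pickP => [i0 _|]; last by rewrite subr0.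
    set d := [ffun _ => _].
    have dge : forall j, 0 <= d j /\ d j <= r.
      move=> j; rewrite /d /x !ffunE; case: (j == i).
        by rewrite addrC addKr lexx.
      by rewrite subrr lexx.
    have h1 : \big[Num.max/d i0]_(j < n) d j <= r.
      apply: (big_ind (fun v => v <= r)); first by case: (dge i0).
        by move=> a b ha hb; rewrite ge_max ha hb.
      by move=> j _; case: (dge j).
    have h2 : 0 <= \big[Num.min/d i0]_(j < n) d j.
      apply: (big_ind (fun v => 0 <= v)); first by case: (dge i0).
        by move=> a b ha hb; rewrite le_min ha hb.
      by move=> j _; case: (dge j).
    by rewrite lerBlDr; apply: (le_trans h1); rewrite lerDl.
  have := Hball x hx i.
  have -> : F (emb x) i = F (emb z) i.
    by apply: Hdiag => j hj; rewrite /x ffunE (negbTE hj).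
  rewrite /emb /tsub_real !ffunE eqxx.
  case: (F _ i) => [v|] //= hv.
  by rewrite addrC lerBrDr addrC.
rewrite /tbot; case: pickP => [i0 _|] //.
  apply: (big_ind (fun v => Tle (Some r) v)); first exact: key.
    move=> [a|] [b|] //= ha hb.
    by rewrite le_min ha hb.
  by move=> j _; exact: key.
by move=> h; move: Hn; case: n h {Hball Hdiag F z key} => // m h; have := h ord0.
Qed.
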